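(* Let $G$ be a graph of order $n\ge 4$. Then $\tau(G)=n-2$ if and only if $G$ is isomorphic to one of: (a) the complete split graph $K_{n-2}\vee\overline{K_2}$; (b) $K_1\vee(K_1+K_{n-2})$; (c) the complete bipartite graph $K_{2,n-2}$; (d) $\overline{K_{n-2}}\vee K_2$.
   Context: Graphs are finite, simple, connected. $+$ denotes disjoint union, $\vee$ the join, $\overline{H}$ the complement. Two vertices $u,v$ are twins if $N(u)\setminus\{v\}=N(v)\setminus\{u\}$; the twin number $\tau(G)$ is the maximum cardinality of an equivalence class of the twin relation. *)

(* Defs.v *)
From mathcomp Require Import all_boot.
Set Implicit Arguments. Unset Strict Implicit. Unset Printing Implicit Defensive.

Definition simple_graph (T : finType) (e : rel T) : Prop :=
  symmetric e /\ irreflexive e.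

Definition connected_graph (T : finType) (e : rel T) : Prop :=
  forall x y : T, connect e x y.

Definition nbhd (T : finType) (e : rel T) (u : T) : {set T} := [set w | e u w].

Definition twins (T : finType) (e : rel T) (u v : T) : bool :=
  nbhd e u :\ v == nbhd e v :\ u.

Definition twin_class (T : finType) (e : rel T) (u : T) : {set T} :=
  [set v | twins e u v].

Definition twin_number (T : finType) (e : rel T) : nat :=
  \max_(u : T) #|twin_class e u|.

Definition isomorphic (T : finType) (e : rel T) (n : nat) (g : rel 'I_n) : Prop :=
  exists f : T -> 'I_n, bijective f /\ forall x y : T, e x y = g (f x) (f y).

(* The four model graphs on vertex set 'I_n; vertices 0 and 1 are the
   distinguished ones, the remaining n-2 vertices form the other part. *)
Definition special (n : nat) (x : 'I_n) : bool := (val x < 2).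

(* (a) K_{n-2} v complement(K_2): all pairs adjacent except the pair {0,1} *)
Definition graph_a (n : nat) : rel 'I_n :=
  fun x y => (x != y) && ~~ (special x && special y).

(* (b) K_1 v (K_1 + K_{n-2}): vertex 0 is universal, vertex 1 is adjacent
   only to 0, vertices >= 2 form a clique *)
Definition graph_b (n : nat) : rel 'I_n :=
  fun x y => (x != y) &&
    ((val x == 0) || (val y == 0) || ((val x != 1) && (val y != 1))).

(* (c) K_{2,n-2}: parts {0,1} and the rest *)
Definition graph_c (n : nat) : rel 'I_n :=
  fun x y => special x != special y.

(* (d) complement(K_{n-2}) v K_2: {0,1} is an edge joined to everything,
   vertices >= 2 independent *)
Definition graph_d (n : nat) : rel 'I_n :=
  fun x y => (x != y) && (special x || special y).

Arguments graph_a n : clear implicits.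
Arguments graph_b n : clear implicits.
Arguments graph_c n : clear implicits.
Arguments graph_d n : clear implicits.

(* Main.v *)
Require Import Defs.
From mathcomp Require Import all_boot zify.
Set Implicit Arguments. Unset Strict Implicit. Unset Printing Implicit Defensive.


Definition sw (n : nat) (i j k : 'I_n) : 'I_n :=
  if k == i then j else if k == j then i else k.

Lemma swK n (i j : 'I_n) : involutive (sw i j).
Proof.
move=> k; rewrite /sw.
case: (eqVneq k i) => [->|ki]; first by rewrite eqxx; case: (eqVneq j i) => [->|] //; rewrite eqxx.
case: (eqVneq k j) => [->|kj]; first by rewrite eqxx.
by rewrite (negbTE ki) (negbTE kj).
Qed.

Lemma spec2 n (x : 'I_n) : special x = (val x == 0) || (val x == 1).
Proof. by rewrite /special; case: x => [[|[|k]] ?]. Qed.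

Section S.
Variables (T : finType) (e : rel T).
Hypothesis esy : symmetric e.
Hypothesis eirr : irreflexive e.

Lemma twinsE u v : twins e u v <-> (forall x, x != u -> x != v -> e u x = e v x).
Proof.
rewrite /twins; split.
- move/eqP => H x xu xv; have := congr1 (fun A : {set T} => x \in A) H; by rewrite /nbhd !inE xu xv.
- move=> H; apply/eqP/setP => x; rewrite /nbhd !inE.
  case: (eqVneq x u) => [->|xu]; first by rewrite ?eqxx eirr ?andbF.
  case: (eqVneq x v) => [->|xv]; first by rewrite ?eqxx eirr ?andbF.
  by apply: H.
Qed.

Lemma iso_formula n (g : rel 'I_n) (G : bool -> bool -> bool -> bool -> bool -> bool) (a b : T) :
  #|T| = n -> 2 <= n -> a != b ->
  (forall x y, e x y = G (x==a) (x==b) (y==a) (y==b) (x==y)) ->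
  (forall i j : 'I_n, g i j = G (val i == 0) (val i == 1) (val j == 0) (val j == 1) (i == j)) ->
  isomorphic e g.
Proof.
move=> hT h2 ab He Hg.
pose h0 := fun x => cast_ord hT (enum_rank x).
have bh0 : bijective h0.
  exists (fun i => enum_val (cast_ord (esym hT) i)) => x; rewrite /h0.
    by rewrite cast_ordK enum_rankK.
  by rewrite enum_valK cast_ordKV.
have h0i := bij_inj bh0.
pose i0 : 'I_n := Ordinal (leq_trans (isT : 0 < 2) h2).
pose i1 : 'I_n := Ordinal h2.
pose s1 := sw (h0 a) i0.
pose s2 := sw (s1 (h0 b)) i1.
pose f := s2 \o (s1 \o h0).
have bf : bijective f.
  apply: bij_comp; first by apply: inv_bij; apply: swK.
  apply: bij_comp => //; by apply: inv_bij; apply: swK.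
have fi := bij_inj bf.
have s1a : s1 (h0 a) = i0 by rewrite /s1 /sw eqxx.
have ne : s1 (h0 b) != i0.
  by rewrite -s1a (inj_eq (can_inj (swK _ _))) (inj_eq h0i) eq_sym.
have fa : f a = i0.
  by rewrite /f /= s1a /s2 /sw eq_sym (negbTE ne) -val_eqE /= .
have fb : f b = i1 by rewrite /f /= /s2 /sw eqxx.
exists f; split => // x y.
rewrite He Hg.
have E0 z : (val (f z) == 0) = (z == a) by rewrite -[0]/(val i0) val_eqE -fa (inj_eq fi).
have E1 z : (val (f z) == 1) = (z == b) by rewrite -[1]/(val i1) val_eqE -fb (inj_eq fi).
by rewrite !E0 !E1 (inj_eq fi).
Qed.

End S.


Section S2.
Variables (T : finType) (e : rel T).
Hypothesis esy : symmetric e.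
Hypothesis eirr : irreflexive e.

Lemma twins_sym u v : twins e u v = twins e v u.
Proof. by rewrite /twins eq_sym. Qed.

Lemma twn_of_formula n (G : bool -> bool -> bool -> bool -> bool -> bool) (a b : T) :
  #|T| = n -> 4 <= n -> a != b ->
  (forall x y, e x y = G (x==a) (x==b) (y==a) (y==b) (x==y)) ->
  (forall s, s != a -> s != b -> ~~ twins e s a /\ ~~ twins e s b) ->
  twin_number e = n - 2.
Proof.
move=> hT h4 ab He Hnt.
set C := [set x | (x != a) && (x != b)].
have cC : #|C| = n - 2.
  have -> : C = ~: [set a; b] by apply/setP => x; rewrite !inE negb_or.
  have := cardsC [set a; b]; rewrite cards2 ab hT; lia.
have clsC s : s \in C -> twin_class e s = C.
  rewrite inE => /andP [sa sb]; apply/setP => x; rewrite /twin_class !inE.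
  case: (eqVneq x a) => [->|xa]; first by rewrite (negbTE (Hnt s sa sb).1).
  case: (eqVneq x b) => [->|xb]; first by rewrite (negbTE (Hnt s sa sb).2).
  apply/(twinsE eirr) => y ys yx.
  by rewrite !He (eq_sym s y) (eq_sym x y) (negbTE sa) (negbTE sb) (negbTE xa) (negbTE xb) (negbTE ys) (negbTE yx).
have other z : z \notin C -> #|twin_class e z| <= 2.
  move=> zC.
  have sub : twin_class e z \subset [set a; b].
    apply/subsetP => s; rewrite inE => tw; rewrite !inE.
    apply/negPn/negP; rewrite negb_or => /andP [sa sb].
    have [h1 h2] := Hnt s sa sb.
    rewrite twins_sym in tw.
    move: zC; rewrite inE negb_and !negbK => /orP [] /eqP zab; subst z.
      by rewrite tw in h1.
    by rewrite tw in h2.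
  by apply: leq_trans (subset_leq_card sub) _; rewrite cards2; case: (a != b).
apply/eqP; rewrite eqn_leq; apply/andP; split.
  apply/bigmax_leqP => z _; case: (boolP (z \in C)) => zC.
    by rewrite clsC // cC.
  by apply: leq_trans (other z zC) _; lia.
have : 0 < #|C| by rewrite cC; lia.
case/card_gt0P => s sC.
by rewrite -cC -(clsC s sC); exact: leq_bigmax.
Qed.

End S2.


Section S3.
Variables (T : finType) (e : rel T).
Hypothesis esy : symmetric e.
Hypothesis eirr : irreflexive e.

Lemma isolated_conn u v : (forall y, e v y = false) -> connect e u v -> u = v.
Proof.
move=> iso c.
have cl : closed e [set v].
  move=> x y exy; rewrite !inE.
  case: (eqVneq x v) => [xv|xv]; first by subst x; rewrite iso in exy.
  case: (eqVneq y v) => [yv|yv] //; by subst y; rewrite esy iso in exy.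
have := closed_connect cl c; rewrite !inE eqxx; by move/eqP.
Qed.

Lemma forward n : #|T| = n -> 4 <= n -> (forall x y, connect e x y) ->
  twin_number e = n - 2 -> exists u a b, [/\ a != b, u \in twin_class e u,
   forall x, (x \in twin_class e u) = (x != a) && (x != b) &
   exists2 w, w \in twin_class e u & w != u].
Proof.
move=> hT h4 conn tw.
have [u hu] : {u : T | \max_u #|twin_class e u| = #|twin_class e u|}.
  by apply: eq_bigmax; rewrite hT; lia.
set C := twin_class e u.
have Cn : #|C| = n - 2 by rewrite -tw /twin_number hu.
have uC : u \in C by rewrite inE /twins eqxx.
have : #|~: C| == 2 by have := cardsC C; rewrite Cn hT; lia.
case/cards2P => [a [b [ab hCab]]].
have memC x : (x \in C) = (x != a) && (x != b).
  by rewrite -[x \in C]negbK -in_setC hCab !inE negb_or.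
exists u, a, b; split => //.
have : 0 < #|C :\ u| by have := cardsD1 u C; rewrite uC Cn; lia.
case/card_gt0P => w; rewrite in_setD1 => /andP [wu wC].
by exists w.
Qed.

End S3.


Ltac neqs := repeat match goal with
 | H : is_true (?u != ?v) |- context [?u == ?v] => rewrite (negbTE H)
 | H : is_true (?u != ?v) |- context [?v == ?u] => rewrite [v == u]eq_sym (negbTE H)
end.

Definition Ga (xa xb ya yb xy : bool) := ~~ xy && ~~ ((xa || xb) && (ya || yb)).
Definition Gb (xa xb ya yb xy : bool) := ~~ xy && (xa || ya || (~~ xb && ~~ yb)).
Definition Gc (xa xb ya yb xy : bool) := (xa || xb) != (ya || yb).
Definition Gd (xa xb ya yb xy : bool) := ~~ xy && (xa || xb || ya || yb).

Lemma gaE n (i j : 'I_n) : graph_a n i j = Ga (val i == 0) (val i == 1) (val j == 0) (val j == 1) (i == j).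
Proof. by rewrite /graph_a /Ga !spec2. Qed.
Lemma gbE n (i j : 'I_n) : graph_b n i j = Gb (val i == 0) (val i == 1) (val j == 0) (val j == 1) (i == j).
Proof. by []. Qed.
Lemma gcE n (i j : 'I_n) : graph_c n i j = Gc (val i == 0) (val i == 1) (val j == 0) (val j == 1) (i == j).
Proof. by rewrite /graph_c /Gc !spec2. Qed.
Lemma gdE n (i j : 'I_n) : graph_d n i j = Gd (val i == 0) (val i == 1) (val j == 0) (val j == 1) (i == j).
Proof. by rewrite /graph_d /Gd !spec2 !orbA. Qed.

Ltac cls x a b := case: (eqVneq x a) => [?|?]; [subst x|case: (eqVneq x b) => [?|?]; [subst x|]].

Section S4.
Variables (T : finType) (e : rel T).
Hypothesis esy : symmetric e.
Hypothesis eirr : irreflexive e.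

Lemma classify n u a b w : #|T| = n -> 2 <= n -> (forall x y, connect e x y) ->
  a != b -> u \in twin_class e u ->
  (forall x, (x \in twin_class e u) = (x != a) && (x != b)) ->
  w \in twin_class e u -> w != u ->
  [\/ isomorphic e (graph_a n), isomorphic e (graph_b n),
      isomorphic e (graph_c n) | isomorphic e (graph_d n)].
Proof.
move=> hT h2 conn ab uC memC wC wu.
set C := twin_class e u in uC memC wC.
have sC s : s \in C -> forall x, x != u -> x != s -> e u x = e s x.
  by rewrite inE => /(twinsE eirr).
have aC : a \notin C by rewrite memC eqxx.
have bC : b \notin C by rewrite memC eqxx andbF.
have nin x y : x \in C -> y \notin C -> y != x.
  by move=> xC yC; apply: contraNneq yC => ->.
have L1 s : s \in C -> s != u -> e u s = e u w.
  move=> sCs su; case: (eqVneq s w) => [->//|sw].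
  have k1 := sC w wC s su sw.
  have ws : w != s by rewrite eq_sym.
  have k2 := sC s sCs w wu ws.
  by rewrite k1 k2 esy.
have eCC s t : s \in C -> t \in C -> e s t = (s != t) && e u w.
  move=> sCs tC; case: (eqVneq s t) => [->|st]; first by rewrite eirr.
  rewrite /=.
  case: (eqVneq s u) => [su|su]; first by subst s; apply: L1; rewrite // eq_sym.
  case: (eqVneq t u) => [tu|tu]; first by subst t; rewrite esy; apply: L1.
  have ts : t != s by rewrite eq_sym.
  by rewrite -(sC s sCs t tu ts); apply: L1.
have eCx s x : s \in C -> x \notin C -> e s x = e u x.
  by move=> sCs xC; rewrite (sC s sCs x (nin u x uC xC) (nin s x sCs xC)).
have eform x y : e x y = if x \in C then (if y \in C then (x != y) && e u w
     else if y == a then e u a else e u b)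
   else if x == a then (if y \in C then e u a else if y == a then false else e a b)
   else (if y \in C then e u b else if y == a then e a b else false).
  have yb z : z \notin C -> z != a -> z = b.
    by rewrite memC negb_and !negbK => /orP [] /eqP -> //; rewrite eqxx.
  case: (boolP (x \in C)) => xC; case: (boolP (y \in C)) => yC.
  - by rewrite eCC.
  - case: (eqVneq y a) => [->|ya]; first by rewrite eCx.
    by rewrite (yb y yC ya) eCx.
  - case: (eqVneq x a) => [->|xa]; first by rewrite esy eCx.
    by rewrite (yb x xC xa) esy eCx.
  - case: (eqVneq x a) => [->|xa]; case: (eqVneq y a) => [->|ya].
    + by rewrite eirr.
    + by rewrite (yb y yC ya).
    + by rewrite (yb x xC xa) esy.
    + by rewrite (yb x xC xa) (yb y yC ya) eirr.
  have ba : b != a by rewrite eq_sym.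
  have ua : u != a by rewrite eq_sym; exact: nin uC aC.
  have ub : u != b by rewrite eq_sym; exact: nin uC bC.
  have closedC : e u a = false -> e u b = false -> False.
    move=> Ha Hb.
    have cl : closed e C.
      move=> x y; rewrite eform Ha Hb.
      case: (x \in C); case: (y \in C) => //=; by case: ifP.
    by have := closed_connect cl (conn u a); rewrite uC (negbTE aC).
  have isoB : e u b = false -> e a b = false -> False.
    move=> Hb Hd.
    have iso : forall y, e b y = false.
      by move=> y; rewrite eform (negbTE bC) (negbTE ba) Hb Hd; case: (y \in C); case: (y == a).
    have ueq := isolated_conn esy iso (conn u b).
    by rewrite ueq in uC; rewrite uC in bC.
  have isoA : e u a = false -> e a b = false -> False.
    move=> Ha Hd.
    have iso : forall y, e a y = false.
      by move=> y; rewrite eform (negbTE aC) eqxx Ha Hd; case: (y \in C); case: (y == a).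
    have ueq := isolated_conn esy iso (conn u a).
    by rewrite ueq in uC; rewrite uC in aC.
  case Hc : (e u w); case Ha : (e u a); case Hb : (e u b); case Hd : (e a b).
  - (* all true: a in C *)
    have : a \in C.
      rewrite inE; apply/(twinsE eirr) => x xu xa.
      rewrite (eform u x) (eform a x) uC (negbTE aC) eqxx Hc Ha Hb Hd.
      by case: (x \in C) => //=; neqs.
    by rewrite (negbTE aC).
  - apply: Or41; apply: (iso_formula (e := e) (G := Ga) hT h2 ab) => [x y|i j]; last exact: gaE.
    rewrite eform Hc Ha Hb Hd !memC /Ga; cls x a b; cls y a b; neqs; rewrite ?eqxx //=;
      by case: (_ == _).
  - apply: Or42; apply: (iso_formula (e := e) (G := Gb) hT h2 ab) => [x y|i j]; last exact: gbE.
    rewrite eform Hc Ha Hb Hd !memC /Gb; cls x a b; cls y a b; neqs; rewrite ?eqxx //=;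
      by case: (_ == _).
  - by case: isoB.
  - apply: Or42; apply: (iso_formula (e := e) (G := Gb) hT h2 ba) => [x y|i j]; last exact: gbE.
    rewrite eform Hc Ha Hb Hd !memC /Gb; cls x a b; cls y a b; neqs; rewrite ?eqxx //=;
      by case: (_ == _).
  - by case: isoA.
  - by case: closedC.
  - by case: closedC.
  - apply: Or44; apply: (iso_formula (e := e) (G := Gd) hT h2 ab) => [x y|i j]; last exact: gdE.
    rewrite eform Hc Ha Hb Hd !memC /Gd; cls x a b; cls y a b; neqs; rewrite ?eqxx //=;
      by case: (_ == _).
  - apply: Or43; apply: (iso_formula (e := e) (G := Gc) hT h2 ab) => [x y|i j]; last exact: gcE.
    rewrite eform Hc Ha Hb Hd !memC /Gc; cls x a b; cls y a b; neqs; rewrite ?eqxx //=;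
      by case: (_ == _).
  -
    have : b \in C.
      rewrite inE; apply/(twinsE eirr) => x xu xb.
      rewrite (eform u x) (eform b x) uC (negbTE bC) (negbTE ba) Hc Ha Hb Hd.
      by case: (x \in C) => //=; neqs; rewrite ?andbF.
    by rewrite (negbTE bC).
  - by case: isoB.
  - have : a \in C.
      rewrite inE; apply/(twinsE eirr) => x xu xa.
      rewrite (eform u x) (eform a x) uC (negbTE aC) eqxx Hc Ha Hb Hd.
      by case: (x \in C) => //=; neqs; rewrite ?andbF.
    by rewrite (negbTE aC).
  - by case: isoA.
  - by case: closedC.
  - by case: closedC.
Qed.

End S4.



Section S5.
Variables (T : finType) (e : rel T).
Hypothesis esy : symmetric e.
Hypothesis eirr : irreflexive e.

Lemma back n (g : rel 'I_n) (G : bool -> bool -> bool -> bool -> bool -> bool) :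
  isomorphic e g ->
  (forall i j : 'I_n, g i j = G (val i == 0) (val i == 1) (val j == 0) (val j == 1) (i == j)) ->
  2 <= n -> exists a b, a != b /\ forall x y, e x y = G (x==a) (x==b) (y==a) (y==b) (x==y).
Proof.
move=> [f [[fi fK fiK] He]] Hg h2.
pose i0 : 'I_n := Ordinal (leq_trans (isT : 0 < 2) h2).
pose i1 : 'I_n := Ordinal h2.
have E0 z : (z == fi i0) = (val (f z) == 0).
  by rewrite -(inj_eq (can_inj fK)) fiK -[0]/(val i0) val_eqE.
have E1 z : (z == fi i1) = (val (f z) == 1).
  by rewrite -(inj_eq (can_inj fK)) fiK -[1]/(val i1) val_eqE.
exists (fi i0), (fi i1); split.
  by rewrite (inj_eq (can_inj fiK)) -val_eqE.
by move=> x y; rewrite He Hg !E0 !E1 (inj_eq (can_inj fK)).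
Qed.

Lemma third (a b s : T) : 4 <= #|T| -> exists t, [/\ t != a, t != b & t != s].
Proof.
move=> h4.
have : 0 < #|~: [set a; b; s]|.
  have := cardsC [set a; b; s].
  have : #|[set a; b; s]| <= 3.
    apply: leq_trans (leq_card_setU _ _) _; rewrite cards1 cards2.
    by case: (a != b).
  lia.
case/card_gt0P => t; rewrite !inE !negb_or => /andP [/andP [ta tb] ts].
by exists t.
Qed.

End S5.



Ltac nt H He W := have := H W; rewrite !He; neqs; rewrite ?eqxx /=; by move/(_ isT isT).

Theorem proposition5 (n : nat) (T : finType) (e : rel T) :
  #|T| = n -> 4 <= n -> simple_graph e -> connected_graph e ->
  (twin_number e = n - 2 <->
     [\/ isomorphic e (graph_a n), isomorphic e (graph_b n),
         isomorphic e (graph_c n) | isomorphic e (graph_d n)]).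
Proof.
move=> hT h4 [esy eirr] conn.
have h2 : 2 <= n by lia.
have h4' : 4 <= #|T| by rewrite hT.
split.
  move=> tw.
  have [u [a [b [ab uC memC [w wC wu]]]]] := forward (e := e) hT h4 conn tw.
  exact: (classify esy eirr hT h2 conn ab uC memC wC wu).
have bk : forall (g : rel 'I_n) (G : bool -> bool -> bool -> bool -> bool -> bool),
    isomorphic e g ->
    (forall i j : 'I_n, g i j = G (val i == 0) (val i == 1) (val j == 0) (val j == 1) (i == j)) ->
    (forall a b, a != b -> (forall x y, e x y = G (x==a) (x==b) (y==a) (y==b) (x==y)) ->
       forall s, s != a -> s != b -> ~~ twins e s a /\ ~~ twins e s b) ->
    twin_number e = n - 2.
  move=> g G iso hg hnt; have [a [b [ab He]]] := back iso hg h2.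
  exact: (twn_of_formula eirr hT h4 ab He (hnt a b ab He)).
case=> iso.
- apply: (bk _ Ga iso (@gaE n)) => a b ab He s sa sb.
  have [t [ta tb ts]] := third a b s h4'.
  by split; apply/negP => /(twinsE eirr) H; [nt H He b | nt H He a].
- apply: (bk _ Gb iso (@gbE n)) => a b ab He s sa sb.
  have [t [ta tb ts]] := third a b s h4'.
  by split; apply/negP => /(twinsE eirr) H; [nt H He b | nt H He t].
- apply: (bk _ Gc iso (@gcE n)) => a b ab He s sa sb.
  have [t [ta tb ts]] := third a b s h4'.
  by split; apply/negP => /(twinsE eirr) H; [nt H He t | nt H He t].
- apply: (bk _ Gd iso (@gdE n)) => a b ab He s sa sb.
  have [t [ta tb ts]] := third a b s h4'.
  by split; apply/negP => /(twinsE eirr) H; [nt H He t | nt H He t].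
Qed.
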